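(* Let $R$ be a field, $S$ an idempotent semifield, and $v:R\to S$ a B\'ezout valuation such that the restriction $v^\circ:R^\circ\to S^\circ$ is surjective. Then there is a one-to-one correspondence between ideals $I\subseteq R^\circ$ and $k$-ideals $J\subseteq S^\circ$, given by $J=v(I)$ and $I=v^{-1}(J)$ (i.e. $I=\{a\in R^\circ: v(a)\in J\}$). This correspondence preserves prime ideals.
   Context: An idempotent semiring is a commutative semiring with $a+a=a$; it is ordered by $a\le b$ iff $a+b=b$. A semifield is a semiring whose nonzero elements are multiplicatively invertible. A (non-Archimedean) seminorm $v:R\to S$ satisfies $v(0)=0$, $v(1)=1$, $v(-1)=1$, $v(ab)\le v(a)v(b)$, $v(a+b)\le v(a)+v(b)$; it is a valuation if it is multiplicative ($v(ab)=v(a)v(b)$) and $v(a)\ne0$ for $a\neq0$. $R^\circ=\{a\in R:v(a)\le1\}$ and $S^\circ=\{x\in S:x\le1\}$; $v^\circ$ is the restriction of $v$. For $R$ a field and $S$ a semifield, a multiplicative seminorm $v$ is B\'ezout if for all $a,b\in R$ there exist $x,y\in R^\circ$ with $v(xa+yb)=v(a)+v(b)$. An ideal of a semiring $S'$ is a subset containing $0$, closed under addition and under multiplication by elements of $S'$; it is a $k$-ideal if $a+b\in I$ and $a\in I$ imply $b\in I$; it is prime if its complement is multiplicatively closed. *)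

(* Defs.v *)
From mathcomp Require Import all_boot all_algebra.
Set Implicit Arguments. Unset Strict Implicit. Unset Printing Implicit Defensive.
Import GRing.Theory.
Local Open Scope ring_scope.

Section Defs.
Variable S : comNzSemiRingType.

Definition idempotent_sr : Prop := forall a : S, a + a = a.
Definition semifield : Prop := forall a : S, a != 0 -> exists b : S, a * b = 1.
Definition leS (a b : S) : Prop := a + b = b.
Definition Scirc (x : S) : Prop := leS x 1.

Variable R : comNzRingType.
Variable v : R -> S.

Definition seminorm : Prop :=
  [/\ v 0 = 0, v 1 = 1, v (-1) = 1,
      (forall a b, leS (v (a * b)) (v a * v b)) &
      (forall a b, leS (v (a + b)) (v a + v b))].

Definition valuation : Prop :=
  [/\ seminorm, (forall a b, v (a * b) = v a * v b) &
      (forall a, a != 0 -> v a != 0)].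

Definition Rcirc (a : R) : Prop := leS (v a) 1.

Definition bezout : Prop :=
  forall a b : R, exists x y : R,
    [/\ Rcirc x, Rcirc y & v (x * a + y * b) = v a + v b].

Definition vcirc_surj : Prop := forall x : S, Scirc x -> exists2 a, Rcirc a & v a = x.

Definition ideal_Rcirc (I : R -> Prop) : Prop :=
  [/\ (forall a, I a -> Rcirc a), I 0,
      (forall a b, I a -> I b -> I (a + b)) &
      (forall r a, Rcirc r -> I a -> I (r * a))].

Definition prime_Rcirc (I : R -> Prop) : Prop :=
  ~ I 1 /\ (forall a b, Rcirc a -> Rcirc b -> ~ I a -> ~ I b -> ~ I (a * b)).

Definition kideal_Scirc (J : S -> Prop) : Prop :=
  [/\ (forall x, J x -> Scirc x), J 0,
      (forall x y, J x -> J y -> J (x + y)),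
      (forall r x, Scirc r -> J x -> J (r * x)) &
      (forall x y, Scirc x -> Scirc y -> J (x + y) -> J x -> J y)].

Definition prime_Scirc (J : S -> Prop) : Prop :=
  ~ J 1 /\ (forall x y, Scirc x -> Scirc y -> ~ J x -> ~ J y -> ~ J (x * y)).

Definition vimage (I : R -> Prop) : S -> Prop := fun x => exists2 a, I a & v a = x.
Definition vpreim (J : S -> Prop) : R -> Prop := fun a => Rcirc a /\ J (v a).

End Defs.

(* Main.v *)
Require Import Defs.
From mathcomp Require Import all_boot all_algebra.
Local Open Scope ring_scope.
Import GRing.Theory.

Section H.
Local Set Implicit Arguments.
Variables (R : fieldType) (S : comNzSemiRingType) (v : R -> S).
Hypothesis idem : idempotent_sr S.
Hypothesis val : valuation v.

Lemma vM a b : v (a * b) = v a * v b.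
Proof. by case: val. Qed.
Lemma v0 : v 0 = 0.
Proof. by case: val => -[]. Qed.
Lemma v1 : v 1 = 1.
Proof. by case: val => -[]. Qed.
Lemma vD a b : leS (v (a + b)) (v a + v b).
Proof. by case: val => -[]. Qed.
Lemma v_eq0 a : v a = 0 -> a = 0.
Proof.
case: val => _ _ H e; apply/eqP; apply: contraT => /H; by rewrite e eqxx.
Qed.
Lemma vinv c : c != 0 -> v (c^-1) * v c = 1.
Proof. by move=> nz; rewrite -vM mulVf // v1. Qed.

Lemma leS_refl (a : S) : leS a a.
Proof. exact: idem. Qed.
Lemma leS_trans (a b c : S) : leS a b -> leS b c -> leS a c.
Proof. rewrite /leS => h1 h2. by rewrite -h2 addrA h1. Qed.
Lemma le_mul (a b c : S) : leS a b -> leS (a * c) (b * c).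
Proof. rewrite /leS => h. by rewrite -mulrDl h. Qed.
Lemma sum_le1 (x y : S) : Scirc x -> Scirc y -> Scirc (x + y).
Proof. rewrite /Scirc /leS => h1 h2. by rewrite -addrA h2 h1. Qed.
Lemma mul_le1 (x y : S) : Scirc x -> Scirc y -> Scirc (x * y).
Proof.
move=> h1 h2; apply: (@leS_trans _ (1 * y)); first exact: le_mul.
by rewrite mul1r.
Qed.
Lemma le_sum (x y : S) : leS y (x + y).
Proof. by rewrite /leS addrCA idem. Qed.

Lemma kdown (J : S -> Prop) (w z : S) : kideal_Scirc J -> J w -> Scirc z -> leS z w -> J z.
Proof.
case=> Hc _ _ _ Hk Jw zc h; apply: (Hk w z) => //; first exact: Hc.
by rewrite addrC h.
Qed.

End H.

Theorem theorem2p12 (R : fieldType) (S : comNzSemiRingType) (v : R -> S) :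
  idempotent_sr S -> semifield S ->
  valuation v -> bezout v -> vcirc_surj v ->
  (forall I : R -> Prop, ideal_Rcirc v I ->
     [/\ kideal_Scirc (vimage v I),
         (forall a, vpreim v (vimage v I) a <-> I a) &
         (prime_Rcirc v I <-> prime_Scirc (vimage v I))]) /\
  (forall J : S -> Prop, kideal_Scirc J ->
     [/\ ideal_Rcirc v (vpreim v J),
         (forall x, vimage v (vpreim v J) x <-> J x) &
         (prime_Scirc J <-> prime_Rcirc v (vpreim v J))]).
Proof.
move=> idem _ val bez surj; split.
- move=> I [IC I0 ID IM].
  have back : forall a, vpreim v (vimage v I) a <-> I a.
    move=> a; split; last first.
      by move=> Ia; split; [exact: IC | exists a].
    case=> ac [c Ic e].
    have [c0|nz] := eqVneq c 0; first subst c.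
      by move: e; rewrite (v0 val) => e; rewrite (v_eq0 val _ (esym e)).
    have -> : a = (a / c) * c by rewrite divfK.
    apply: IM => //; rewrite /Rcirc (vM val) -e mulrC (vinv val _ nz).
    exact: (leS_refl idem).
  split => //.
  + split.
    * by move=> x [a Ia <-]; exact: IC.
    * by exists 0 => //; rewrite (v0 val).
    * move=> x y [a Ia <-] [b Ib <-].
      have [r [s [rc sc e]]] := bez a b.
      by exists (r * a + s * b) => //; apply: ID; apply: IM.
    * move=> r x rc [a Ia <-].
      have [c cc <-] := surj r rc.
      by exists (c * a); [exact: IM | rewrite (vM val)].
    * move=> x y xc yc [c Ic e] _.
      have [b bc eb] := surj y yc.
      have le : leS y (v c) by rewrite e; exact: (le_sum idem).
      have [c0|nz] := eqVneq c 0.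
        move: le; rewrite c0 (v0 val) /leS addr0 => ->.
        by exists 0 => //; rewrite (v0 val).
      exists ((b / c) * c); last by rewrite divfK.
      apply: IM => //; rewrite /Rcirc (vM val) eb.
      have := le_mul (v (c^-1)) le.
      by rewrite [v c * _]mulrC (vinv val _ nz) mulrC.
  + have I1 : I 1 <-> vimage v I 1.
      split; first by move=> h; exists 1 => //; rewrite (v1 val).
      move=> h; apply/back; split => //; first by rewrite /Rcirc (v1 val); exact: leS_refl.
      by rewrite (v1 val).
    split.
    * case=> n1 Hp; split; first by move=> /I1.
      move=> x y xc yc nx ny.
      have [a ac ea] := surj x xc; have [b bc eb] := surj y yc.
      have na : ~ I a by move=> Ia; apply: nx; exists a.
      have nb : ~ I b by move=> Ib; apply: ny; exists b.
      move=> h; apply: (Hp a b ac bc na nb); apply/back; split.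
        by rewrite /Rcirc (vM val) ea eb; exact: mul_le1.
      by rewrite (vM val) ea eb.
    * case=> n1 Hp; split; first by move=> /I1.
      move=> a b ac bc na nb Iab.
      have nva : ~ vimage v I (v a) by move=> h; apply: na; apply/back.
      have nvb : ~ vimage v I (v b) by move=> h; apply: nb; apply/back.
      apply: (Hp _ _ ac bc nva nvb); rewrite -(vM val); by exists (a * b).
- move=> J Jk; have Jk' := Jk; case: Jk' => JC J0 JD JM Jkk.
  split.
  + split.
    * by move=> a [].
    * split; last by rewrite (v0 val).
      by rewrite /Rcirc (v0 val) /leS add0r.
    * move=> a b [ac Ja] [bc Jb].
      have sc : Scirc (v a + v b) by exact: sum_le1.
      have c : Rcirc v (a + b) by apply: leS_trans (vD val a b) sc.
      split => //; apply: (kdown Jk (JD _ _ Ja Jb) c); exact: vD.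
    * move=> r a rc [ac Ja]; rewrite /vpreim /Rcirc (vM val); split.
        exact: mul_le1.
      exact: JM.
  + move=> x; split; first by case=> a [_ Ja] <-.
    move=> Jx; have [a ac ea] := surj x (JC _ Jx).
    by exists a => //; split => //; rewrite ea.
  + have c1 : Rcirc v 1 by rewrite /Rcirc (v1 val); exact: leS_refl.
    split.
    * case=> n1 Hp; split; first by case=> _; rewrite (v1 val).
      move=> a b ac bc na nb [_ Jab]; move: Jab; rewrite (vM val).
      apply: Hp; first exact: ac. exact: bc.
        by move=> h; apply: na.
      by move=> h; apply: nb.
    * case=> n1 Hp; split; first by move=> h; apply: n1; split; rewrite ?v1.
      move=> x y xc yc nx ny Jxy.
      have [a ac ea] := surj x xc; have [b bc eb] := surj y yc.
      apply: (Hp a b ac bc).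
        by case=> _; rewrite ea.
        by case=> _; rewrite eb.
      rewrite /vpreim /Rcirc (vM val) ea eb; split => //; exact: mul_le1.
Qed.
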